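(* Let $\mathcal{X}\subseteq\mathbb{R}^n$ be compact, $\mathcal{X}_0\subseteq\mathcal{X}$, $U\subseteq\mathbb{R}^m$, and $f:\mathcal{X}\times U\to\mathcal{X}$. Let $\mathcal{X}_{VF}\subseteq\mathcal{X}$ be partitioned as $\mathcal{X}_{VF}=\bigcup_{i=1}^{p}\mathcal{X}_{VF_i}$ for some $p\in\mathbb{N}$. Suppose there exist a function $\mathcal{T}:\mathcal{X}\times\mathcal{X}\to\mathbb{R}$ and functions $\mathcal{V}_i:\mathcal{X}\times\mathcal{X}\to\mathbb{R}_{\geq0}$ (bounded from below), $1\le i\le p$, such that: (i) for every $x\in\mathcal{X}$ there exists $u\in U$ with $\mathcal{T}(x,f(x,u))\geq 0$; (ii) for all $x,y\in\mathcal{X}$ and all $u\in U$: if $\mathcal{T}(x,f(x,u))\geq 0$ and $\mathcal{T}(f(x,u),y)\geq 0$, then $\mathcal{T}(x,y)\geq 0$; (iii) for every $x_0\in\mathcal{X}_0$ and every $1\le i\le p$ there exists $\xi_i>0$ such that for all $z,z'\in\mathcal{X}_{VF_i}$: if $\mathcal{T}(x_0,z)\geq0$ and $\mathcal{T}(z,z')\geq 0$, then $\mathcal{V}_i(x_0,z')\leq\mathcal{V}_i(x_0,z)-\xi_i$. Then there exists a state-feedback controller $\kappa:\mathcal{X}\to 2^U\setminus\{\emptyset\}$ such that every state trajectory of the system under $\kappa$ visits $\mathcal{X}_{VF}$ only finitely often.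
   Context: A discrete-time control system $(\mathcal{X},\mathcal{X}_0,U,f)$ has compact state set $\mathcal{X}$, initial set $\mathcal{X}_0$, input set $U$ and transition function $f$. Given a state-feedback controller $\kappa:\mathcal{X}\to 2^U\setminus\{\emptyset\}$, a state trajectory under $\kappa$ is any sequence $\langle x_0,x_1,\ldots\rangle$ with $x_0\in\mathcal{X}_0$ and $x_{k+1}=f(x_k,u_k)$ for some $u_k\in\kappa(x_k)$, for all $k\in\mathbb{N}$. A trajectory visits a set only finitely often if only finitely many $x_k$ lie in that set. *)

(* Defs.v *)
From HB Require Import structures.
From mathcomp Require Import all_boot all_order all_algebra.
From mathcomp Require Import all_classical all_reals all_analysis.
Import numFieldNormedType.Exports.
Set Implicit Arguments. Unset Strict Implicit. Unset Printing Implicit Defensive.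
Local Open Scope classical_set_scope.

Definition is_controller {S I : Type} (X : set S) (U : set I)
  (kappa : S -> set I) : Prop :=
  forall x, X x -> kappa x `<=` U /\ kappa x !=set0.

Definition is_trajectory {S I : Type} (X0 : set S) (f : S -> I -> S)
  (kappa : S -> set I) (xs : nat -> S) : Prop :=
  X0 (xs 0%N) /\ forall k : nat, exists2 u, kappa (xs k) u & xs k.+1 = f (xs k) u.

Definition visits_finitely_often {S : Type} (xs : nat -> S) (A : set S) : Prop :=
  finite_set [set k : nat | A (xs k)].

(* Main.v *)
Require Import Defs.
From HB Require Import structures.
From mathcomp Require Import all_boot all_order all_algebra.
From mathcomp Require Import all_classical all_reals all_analysis.
Import numFieldNormedType.Exports.
Import Order.TTheory GRing.Theory Num.Theory.
Local Open Scope classical_set_scope.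
Local Open Scope ring_scope.

Theorem theorem2 (R : realType) (n m p : nat)
  (X X0 : set 'rV[R]_n) (U : set 'rV[R]_m) (f : 'rV[R]_n -> 'rV[R]_m -> 'rV[R]_n)
  (XVF : 'I_p -> set 'rV[R]_n)
  (T : 'rV[R]_n -> 'rV[R]_n -> R) (V : 'I_p -> 'rV[R]_n -> 'rV[R]_n -> R) :
  compact X ->
  X0 `<=` X ->
  (forall x u, X x -> U u -> X (f x u)) ->
  (forall i, XVF i `<=` X) ->
  (forall i j, i != j -> XVF i `&` XVF j = set0) ->
  (forall i x y, X x -> X y -> 0 <= V i x y) ->
  (forall x, X x -> exists2 u, U u & 0 <= T x (f x u)) ->
  (forall x y u, X x -> X y -> U u ->
     0 <= T x (f x u) -> 0 <= T (f x u) y -> 0 <= T x y) ->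
  (forall x0, X0 x0 -> forall i, exists2 xi : R, 0 < xi &
     forall z z', XVF i z -> XVF i z' -> 0 <= T x0 z -> 0 <= T z z' ->
       V i x0 z' <= V i x0 z - xi) ->
  exists kappa : 'rV[R]_n -> set 'rV[R]_m,
    is_controller X U kappa /\
    forall xs, is_trajectory X0 f kappa xs ->
      visits_finitely_often xs (\bigcup_(i in [set: 'I_p]) XVF i).
Proof.
move=> cX X0X fX XVFX _ V0 Hi Hii Hiii.
exists (fun x => [set u | U u /\ 0 <= T x (f x u)]); split.
  move=> x Xx; split; first by move=> u [].
  by have [u Uu Tu] := Hi x Xx; exists u.
move=> xs [H0 Hstep].
have HX : forall k, X (xs k).
  elim=> [|k IH]; first exact: X0X.
  by have [u [Uu _] ->] := Hstep k; apply: fX.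
have HT : forall d j, 0 <= T (xs j) (xs (j + d.+1)%N).
  elim=> [|d IH] j.
    by rewrite addn1; have [u [_ Tu] ->] := Hstep j.
  have [u [Uu Tu] E] := Hstep j.
  apply: (Hii _ _ u (HX j) (HX _) Uu Tu); rewrite -E.
  by have := IH j.+1; rewrite addSnnS.
have HT' : forall j k, (j < k)%N -> 0 <= T (xs j) (xs k).
  move=> j k jk; have := HT (k - j.+1)%N j.
  by rewrite addnS -addSn subnKC.
have Hb : forall i : 'I_p, exists K, forall k, XVF i (xs k) -> (k < K)%N.
  move=> i.
  have [xi xi0 Hxi] := Hiii _ H0 i.
  have claim : forall N a, (0 < a)%N -> XVF i (xs a) ->
      V i (xs 0%N) (xs a) < N%:R * xi ->
      exists K, forall k, (a <= k)%N -> XVF i (xs k) -> (k < K)%N.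
    elim=> [|N IH] a a0 Sa.
      by rewrite mul0r => /(le_lt_trans (V0 _ _ _ (HX 0%N) (HX a))); rewrite ltxx.
    move=> Va.
    have [[k' [ak' Sk']]|nex] := pselect (exists k', (a < k')%N /\ XVF i (xs k')).
      have Vk' : V i (xs 0%N) (xs k') < N%:R * xi.
        apply: (le_lt_trans (Hxi _ _ Sa Sk' (HT' _ _ a0) (HT' _ _ ak'))).
        by rewrite ltrBlDr; move: Va; rewrite -natr1 mulrDl mul1r.
      have [K HK] := IH k' (leq_ltn_trans (leq0n _) ak') Sk' Vk'.
      exists (maxn K k'.+1) => k ak Sk.
      case: (ltnP k k') => kk'.
        by rewrite leq_max ltnS (ltnW kk') orbT.
      by rewrite leq_max HK.
    exists a.+1 => k ak Sk; rewrite ltnS.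
    case: (leqP k a) => // ka; exfalso; exact: nex (ex_intro _ k (conj ka Sk)).
  have [[a [a0 Sa]]|nex] := pselect (exists a, (0 < a)%N /\ XVF i (xs a)).
    have Vpos : 0 <= V i (xs 0%N) (xs a) / xi.
      by rewrite divr_ge0 // ?V0 // ltW.
    have VN : V i (xs 0%N) (xs a) < (Num.Def.archi_bound (V i (xs 0%N) (xs a) / xi))%:R * xi.
      by rewrite -ltr_pdivrMr // archi_boundP.
    have [K HK] := claim _ a a0 Sa VN.
    exists (maxn K a.+1) => k Sk.
    case: (leqP a k) => ak; first by rewrite leq_max HK.
    by rewrite leq_max ltnS (ltnW ak) orbT.
  exists 1%N => k Sk; case: k Sk => // k Sk; exfalso; exact: nex (ex_intro _ k.+1 (conj isT Sk)).
have [Kf HKf] := choice Hb.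
apply: (@sub_finite_set _ _ `I_((\max_i Kf i)%N)) => //.
move=> k [i _ Hk].
apply: (leq_trans (HKf i k Hk)). exact: leq_bigmax.
Qed.
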